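(* Let $0<p<1$, $n\ge2$, and let $X_1,\dots,X_n$ be i.i.d. with density $f_p(x)=px^{p-1}$, $0<x\le1$. Let $Q=\sum_{i=1}^n(X_i-\overline X)^2$. Then as $x\to0^+$, $$P\{Q\le x\}=O\big(x^{\min(pn,\,n-1)/2}\big)\ \text{ if } np\ne n-1,\qquad P\{Q\le x\}=O\big(x^{(n-1)/2}\ln(1/x)\big)\ \text{ if } np=n-1.$$ *)

(* Defs.v *)
From Stdlib Require Import Reals.
Open Scope R_scope.

Fixpoint rsum (n : nat) (f : nat -> R) : R :=
  match n with O => 0 | S k => rsum k f + f k end.
Fixpoint rprod (n : nat) (f : nat -> R) : R :=
  match n with O => 1 | S k => rprod k f * f k end.

(* CDF of the law with density f_p(x) = p x^(p-1) on (0,1]: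
   F_p(t) = int_0^t p s^(p-1) ds = t^p for 0 <= t <= 1. *)
Definition Fp (p t : R) : R :=
  if Rle_dec t 0 then 0 else if Rle_dec t 1 then Rpower t p else 1.

(* points of R^n are represented by x : nat -> R, only x 0 .. x (n-1) matter *)
Definition in_box (n : nat) (a b x : nat -> R) : Prop :=
  forall i, (i < n)%nat -> a i < x i <= b i.

(* probability, under the law of (X_1,...,X_n) i.i.d. with CDF Fp p,
   of the box (a,b] = prod_i (F(b_i) - F(a_i)) *)
Definition box_prob (p : R) (n : nat) (a b : nat -> R) : R :=
  rprod n (fun i => Rmax 0 (Fp p (b i) - Fp p (a i))).

(* P(S) <= c, where P is the (outer) product probability measure obtained
   from box probabilities by countable covers (Caratheodory extension). *)
Definition prob_le (p : R) (n : nat) (S : (nat -> R) -> Prop) (c : R) : Prop :=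
  forall eps, 0 < eps ->
    exists a b : nat -> nat -> R,
      (forall x, S x -> exists k, in_box n (a k) (b k) x) /\
      (forall N, rsum N (fun k => box_prob p n (a k) (b k)) <= c + eps).

Definition mean (n : nat) (x : nat -> R) : R := rsum n x / INR n.

Definition Qstat (n : nat) (x : nat -> R) : R :=
  rsum n (fun i => (x i - mean n x) ^ 2).

(* Main.v *)
Require Import Defs.
From Stdlib Require Import Reals Lra Lia ZArith.
Open Scope R_scope.

Lemma rsum_ext_le n f g : (forall i, (i < n)%nat -> f i <= g i) -> rsum n f <= rsum n g.
Proof.
  induction n; simpl; intros H. lra.
  assert (rsum n f <= rsum n g) by (apply IHn; intros; apply H; lia).
  assert (f n <= g n) by (apply H; lia). lra.
Qed.

Lemma rsum_nonneg_le n f i : (forall j, (j < n)%nat -> 0 <= f j) -> (i < n)%nat -> f i <= rsum n f.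
Proof.
  induction n; simpl; intros H Hi. lia.
  assert (0 <= rsum n f).
  { clear IHn Hi. induction n; simpl. lra.
    assert (0 <= f n) by (apply H; lia).
    assert (0 <= rsum n f) by (apply IHn; intros; apply H; lia). lra. }
  destruct (Nat.eq_dec i n). subst. lra.
  assert (f i <= rsum n f) by (apply IHn; [intros; apply H; lia| lia]).
  assert (0 <= f n) by (apply H; lia). lra.
Qed.

Lemma rsum_tele n d : rsum n (fun k => d (S k) - d k) = d n - d O.
Proof. induction n; simpl. ring. rewrite IHn. ring. Qed.

Lemma rprod_const n c : rprod n (fun _ => c) = c ^ n.
Proof. induction n; simpl. ring. rewrite IHn. ring. Qed.

Lemma rprod_zero n f : (0 < n)%nat -> f O = 0 -> rprod n f = 0.
Proof.
  induction n; simpl; intros H H0. lia.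
  destruct n. simpl. rewrite H0. ring. rewrite IHn; [ring|lia|auto].
Qed.

Lemma nat_floor r : 0 <= r -> exists m : nat, INR m <= r < INR m + 1.
Proof.
  intros Hr. destruct (archimed r) as [H1 H2].
  assert (Hp : (0 < up r)%Z) by (apply lt_0_IZR; lra).
  exists (Z.to_nat (up r - 1)).
  rewrite INR_IZR_INZ, Z2Nat.id by lia. rewrite minus_IZR. lra.
Qed.

Lemma close n y x i : (0 < n)%nat -> 0 < x -> Qstat n y <= x -> (i < n)%nat ->
  Rabs (y i - y O) <= 2 * sqrt x.
Proof.
  intros Hn Hx HQ Hi.
  assert (Hb : forall j, (j < n)%nat -> Rabs (y j - mean n y) <= sqrt x).
  { intros j Hj. rewrite <- sqrt_Rsqr_abs. apply sqrt_le_1.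
    apply Rle_0_sqr. lra. unfold Rsqr.
    eapply Rle_trans; [|apply HQ]. unfold Qstat.
    replace ((y j - mean n y) * (y j - mean n y)) with ((fun k => (y k - mean n y)^2) j) by (simpl; ring).
    apply (rsum_nonneg_le n (fun k => (y k - mean n y)^2)); auto. intros. apply pow2_ge_0. }
  pose proof (Hb i Hi). pose proof (Hb O Hn).
  replace (y i - y O) with ((y i - mean n y) - (y O - mean n y)) by ring.
  eapply Rle_trans. apply Rabs_triang. rewrite Rabs_Ropp. lra.
Qed.

Lemma Rpower_pos a c : 0 < Rpower a c.
Proof. unfold Rpower; apply exp_pos. Qed.

Lemma Rpower_decr_base a b c : c <= 0 -> 0 < a <= b -> Rpower b c <= Rpower a c.
Proof.
  intros Hc [Ha Hab]. unfold Rpower. destruct (Rle_lt_or_eq_dec _ _ Hab) as [H|H].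
  - assert (ln a < ln b) by (apply ln_increasing; lra).
    destruct (Rle_lt_or_eq_dec _ _ Hc) as [H'|H'].
    + left; apply exp_increasing; nra.
    + subst; right; f_equal; ring.
  - subst; lra.
Qed.

Lemma Rpower_small_base s e1 e2 : 0 < s <= 1 -> e1 <= e2 -> Rpower s e2 <= Rpower s e1.
Proof.
  intros [H0 H1] He. unfold Rpower.
  assert (ln s <= 0). { destruct (Rle_lt_or_eq_dec _ _ H1). left; rewrite <- ln_1; apply ln_increasing; lra. subst; rewrite ln_1; lra. }
  destruct (Rle_lt_or_eq_dec _ _ He) as [H'|H']. 2:{ subst; lra. }
  destruct (Rle_lt_or_eq_dec _ _ H) as [H2|H2].
  left; apply exp_increasing; nra. rewrite H2; right; f_equal; ring.
Qed.

Lemma Rpower_split t p : 0 < t -> Rpower t p = t * Rpower t (p - 1).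
Proof.
  intros Ht. replace p with (1 + (p - 1)) at 1 by ring.
  rewrite Rpower_plus, Rpower_1; auto.
Qed.

Lemma pow_diff u h p : 0 < u -> 0 <= h -> p <= 1 ->
  Rpower (u + h) p - Rpower u p <= h * Rpower u (p - 1).
Proof.
  intros Hu Hh Hp. rewrite (Rpower_split (u+h)) by lra. rewrite (Rpower_split u) by lra.
  assert (Rpower (u + h) (p-1) <= Rpower u (p-1)) by (apply Rpower_decr_base; lra).
  nra.
Qed.

Section F.
Variable p : R.
Hypothesis hp : 0 < p < 1.

Lemma Fp_nonpos t : t <= 0 -> Fp p t = 0.
Proof. intros; unfold Fp; destruct (Rle_dec t 0); lra. Qed.

Lemma Fp_gt1 t : 1 < t -> Fp p t = 1.
Proof. intros; unfold Fp; destruct (Rle_dec t 0); try lra; destruct (Rle_dec t 1); lra. Qed.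

Lemma one_le_pow t : 1 <= t -> 1 <= Rpower t p.
Proof. intros. rewrite <- (Rpower_O t) by lra. apply Rle_Rpower; lra. Qed.

Lemma pow_le_one t : 0 < t <= 1 -> Rpower t p <= 1.
Proof. intros. rewrite <- (Rpower_O t) by lra. apply Rpower_small_base; lra. Qed.

Lemma Fp_le_pow t : 0 < t -> Fp p t <= Rpower t p.
Proof.
  intros; unfold Fp; destruct (Rle_dec t 0); try lra; destruct (Rle_dec t 1); try lra.
  apply one_le_pow; lra.
Qed.

Lemma Fp_mono a b : a <= b -> Fp p a <= Fp p b.
Proof.
  intros H; unfold Fp.
  destruct (Rle_dec a 0); destruct (Rle_dec b 0); try lra;
  destruct (Rle_dec a 1); destruct (Rle_dec b 1); try lra.
  - left; apply Rpower_pos.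
  - apply Rle_Rpower_l; lra.
  - apply pow_le_one; lra.
Qed.

Lemma Fp_diff a b : 0 < a <= b -> Fp p b - Fp p a <= Rpower b p - Rpower a p.
Proof.
  intros H; unfold Fp.
  destruct (Rle_dec a 0); destruct (Rle_dec b 0); try lra;
  destruct (Rle_dec a 1); destruct (Rle_dec b 1); try lra.
  - assert (1 <= Rpower b p) by (apply one_le_pow; lra). lra.
  - assert (Rpower a p <= Rpower b p) by (apply Rle_Rpower_l; lra). lra.
Qed.
End F.
Lemma phi_props (phi : R -> R) (al : R) : 0 <= al ->
  (forall c, 0 < c -> derivable_pt_lim phi c (Rpower c (- al))) ->
  (forall t t', 0 < t -> t <= t' -> phi t <= phi t') /\
  (forall j, 1 < j -> Rpower j (- al) <= phi j - phi (j - 1)).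
Proof.
  intros Hal Hd. split.
  - intros t t' Ht Htt. destruct (Rle_lt_or_eq_dec _ _ Htt) as [H|H]. 2:{ subst; lra. }
    destruct (MVT_cor2 phi (fun c => Rpower c (-al)) t t' H) as [c [Hc1 Hc2]].
    { intros; apply Hd; lra. }
    assert (0 < Rpower c (-al)) by apply Rpower_pos. nra.
  - intros j Hj.
    destruct (MVT_cor2 phi (fun c => Rpower c (-al)) (j-1) j) as [c [Hc1 Hc2]]. lra.
    { intros; apply Hd; lra. }
    rewrite Hc1. replace (j - (j-1)) with 1 by ring. rewrite Rmult_1_r.
    apply Rpower_decr_base; lra.
Qed.

Lemma deriv_pw a c : a <> 0 -> 0 < c ->
  derivable_pt_lim (fun t => / a * Rpower t a) c (Rpower c (- (1 - a))).
Proof.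
  intros Ha Hc.
  replace (Rpower c (- (1 - a))) with (/ a * (a * Rpower c (a - 1))).
  2:{ replace (- (1-a)) with (a - 1) by ring. field. auto. }
  apply (derivable_pt_lim_scal (fun t => Rpower t a)). apply derivable_pt_lim_power; auto.
Qed.

Lemma deriv_ln c : 0 < c -> derivable_pt_lim ln c (Rpower c (- 1)).
Proof.
  intros Hc. replace (-1) with (Ropp 1) by ring. rewrite Rpower_Ropp, Rpower_1 by auto. apply derivable_pt_lim_ln; auto.
Qed.

Definition ea (s : R) (m : nat) : nat -> R := fun _ => (INR m - 3) * s.
Definition eb (s : R) (m : nat) : nat -> R := fun _ => (INR m + 3) * s.
Definition oa (m : nat) : nat -> R := fun i => if Nat.eqb i 0 then -(INR m + 1) else -(INR m + 1) - 2.
Definition ob (m : nat) : nat -> R := fun i => if Nat.eqb i 0 then - INR m else - INR m + 2.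
Definition BA s k := if Nat.even k then ea s (Nat.div2 k) else oa (Nat.div2 k).
Definition BB s k := if Nat.even k then eb s (Nat.div2 k) else ob (Nat.div2 k).

Lemma abs_le a b : Rabs a <= b -> - b <= a <= b.
Proof. unfold Rabs; destruct (Rcase_abs a); lra. Qed.

Lemma cover n x y : (0 < n)%nat -> 0 < x < / 4 -> Qstat n y <= x ->
  exists k, in_box n (BA (sqrt x) k) (BB (sqrt x) k) y.
Proof.
  intros Hn Hx HQ.
  assert (Hc : forall i, (i < n)%nat -> Rabs (y i - y O) <= 2 * sqrt x) by (intros i Hi; apply (close n y x i); auto; lra).
  set (s := sqrt x) in *.
  assert (Hs0 : 0 < s) by (apply sqrt_lt_R0; lra).
  assert (Hss : s * s = x) by (apply sqrt_sqrt; lra).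
  assert (Hs1 : s < / 2) by nra.
  destruct (Rle_dec (y O) 0) as [Hy|Hy].
  - destruct (nat_floor (- y O)) as [m Hm]. lra.
    exists (S (2 * m)). unfold BA, BB. replace (S (2*m)) with (2*m+1)%nat by lia.
    rewrite Nat.even_odd. replace (2*m+1)%nat with (S (2*m)) by lia. rewrite Nat.div2_succ_double.
    intros i Hi. pose proof (abs_le _ _ (Hc i Hi)) as Hci. unfold oa, ob.
    destruct (Nat.eqb_spec i 0). subst i. simpl; lra. simpl; lra.
  - assert (Hr : 0 <= y O / s) by (apply Rlt_le, Rdiv_lt_0_compat; lra).
    destruct (nat_floor _ Hr) as [m Hm].
    assert (INR m * s <= y O < (INR m + 1) * s).
    { destruct Hm as [H1 H2]. split.
      - apply Rmult_le_compat_r with (r := s) in H1; [|lra]. unfold Rdiv in H1.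
        rewrite Rmult_assoc, Rinv_l, Rmult_1_r in H1; lra.
      - apply Rmult_lt_compat_r with (r := s) in H2; [|lra]. unfold Rdiv in H2.
        rewrite Rmult_assoc, Rinv_l, Rmult_1_r in H2; lra. }
    exists (2 * m)%nat. unfold BA, BB. rewrite Nat.even_even, Nat.div2_double.
    intros i Hi. pose proof (abs_le _ _ (Hc i Hi)) as Hci. unfold ea, eb. nra.
Qed.

Lemma Fp_nonneg p t : 0 < p -> 0 <= Fp p t.
Proof. intros; unfold Fp; destruct (Rle_dec t 0); try lra; destruct (Rle_dec t 1); try lra. left; apply Rpower_pos. Qed.


Lemma sum_bound p n x phi al : 0 < p < 1 -> (2 <= n)%nat -> 0 < x < / 4 -> al = (1 - p) * INR n ->
  (forall t t', 0 < t -> t <= t' -> phi t <= phi t') ->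
  (forall j, 1 < j -> Rpower j (- al) <= phi j - phi (j - 1)) ->
  forall N, rsum N (fun k => box_prob p n (BA (sqrt x) k) (BB (sqrt x) k)) <=
    5 * Rpower (7 * sqrt x) (p * INR n) + 6 ^ n * Rpower (sqrt x) (p * INR n) * (phi (/ sqrt x) - phi 1).
Proof.
  intros hp hn Hx Hal Hmono Hstep N.
  set (s := sqrt x).
  assert (Hs0 : 0 < s) by (apply sqrt_lt_R0; lra).
  assert (Hss : s * s = x) by (apply sqrt_sqrt; lra).
  assert (Hs1 : s < / 2) by nra.
  assert (His : 2 < / s).
  { replace 2 with (/ / 2) by field. apply Rinv_lt_contravar; nra. }
  set (c1 := Rpower (7 * s) (p * INR n)).
  set (c2 := 6 ^ n * Rpower s (p * INR n)).
  assert (Hc1 : 0 <= c1) by (left; apply Rpower_pos).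
  assert (Hc2 : 0 <= c2) by (unfold c2; apply Rmult_le_pos; [apply pow_le; lra| left; apply Rpower_pos]).
  set (H := fun m : nat => c1 * Rmin (INR m) 5 + c2 * phi (Rmin (Rmax (INR m - 4) 1) (/ s))).
  set (G := fun m : nat => (Rmax 0 (Fp p ((INR m + 3) * s) - Fp p ((INR m - 3) * s))) ^ n).
  assert (HG : forall m, G m <= H (S m) - H m).
  { intros m. unfold G, H. rewrite S_INR.
    set (g := Rmax 0 (Fp p ((INR m + 3) * s) - Fp p ((INR m - 3) * s))).
    assert (Hg0 : 0 <= g) by apply Rmax_l.
    pose proof (pos_INR m) as Hm0.
    destruct (le_lt_dec 5 m) as [Hm|Hm].
    - assert (Hm5 : 5 <= INR m) by (replace 5 with (INR 5) by (simpl; ring); apply le_INR; auto).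
      rewrite (Rmin_right (INR m + 1) 5), (Rmin_right (INR m) 5) by lra.
      rewrite (Rmax_left (INR m + 1 - 4) 1), (Rmax_left (INR m - 4) 1) by lra.
      set (j := INR m - 3).
      replace (INR m + 1 - 4) with j by (unfold j; ring). replace (INR m - 4) with (j - 1) by (unfold j; ring).
      destruct (Rle_dec (j * s) 1) as [Hjs|Hjs].
      + assert (j <= / s). { apply Rmult_le_reg_r with s; auto. rewrite Rinv_l; lra. }
        rewrite (Rmin_left j), (Rmin_left (j - 1)) by lra.
        assert (Hj := Hstep j ltac:(unfold j; lra)).
        assert (g <= 6 * Rpower s p * Rpower j (p - 1)).
        { unfold g. apply Rmax_lub. apply Rmult_le_pos. apply Rmult_le_pos. lra. left; apply Rpower_pos. left; apply Rpower_pos.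
          replace ((INR m + 3) * s) with (j * s + 6 * s) by (unfold j; ring).
          replace ((INR m - 3) * s) with (j * s) by (unfold j; ring).
          assert (0 < j * s) by (unfold j; nra).
          eapply Rle_trans. apply Fp_diff; auto; nra.
          eapply Rle_trans. apply pow_diff; nra.
          rewrite <- Rpower_mult_distr by (unfold j; lra).
          rewrite (Rpower_split s p) by lra. nra. }
        assert (Hgn : g ^ n <= (6 * Rpower s p * Rpower j (p - 1)) ^ n) by (apply pow_incr; lra).
        rewrite !Rpow_mult_distr in Hgn.
        rewrite <- (Rpower_pow n 6), <- (Rpower_pow n (Rpower s p)), <- (Rpower_pow n (Rpower j (p-1))) in Hgn; try apply Rpower_pos; try lra.
        rewrite !Rpower_mult in Hgn.
        replace ((p - 1) * INR n) with (- al) in Hgn by (rewrite Hal; ring).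
        unfold c2. rewrite <- (Rpower_pow n 6) by lra.
        assert (0 <= Rpower 6 (INR n) * Rpower s (p * INR n)) by (apply Rmult_le_pos; left; apply Rpower_pos).
        nra.
      + assert (Hg : g = 0).
        { unfold g. rewrite !Fp_gt1; try (unfold j in Hjs; nra). rewrite Rmax_left; lra. }
        rewrite Hg. rewrite pow_i by lia.
        assert (phi (Rmin (j - 1) (/ s)) <= phi (Rmin j (/ s))).
        { apply Hmono. apply Rmin_glb_lt; unfold j; lra.
          unfold Rmin; destruct (Rle_dec (j-1) (/s)); destruct (Rle_dec j (/s)); lra. }
        nra.
    - assert (Hm4 : INR m <= 4) by (replace 4 with (INR 4) by (simpl; ring); apply le_INR; lia).
      rewrite (Rmin_left (INR m + 1) 5), (Rmin_left (INR m) 5) by lra.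
      rewrite (Rmax_right (INR m + 1 - 4) 1), (Rmax_right (INR m - 4) 1) by lra.
      assert (g <= Rpower (7 * s) p).
      { unfold g. apply Rmax_lub. left; apply Rpower_pos.
        pose proof (Fp_nonneg p ((INR m - 3) * s) ltac:(lra)).
        assert (Fp p ((INR m + 3) * s) <= Fp p (7 * s)) by (apply Fp_mono; nra).
        pose proof (Fp_le_pow p hp (7 * s) ltac:(lra)). lra. }
      assert (Hgn : g ^ n <= Rpower (7 * s) p ^ n) by (apply pow_incr; lra).
      rewrite <- (Rpower_pow n (Rpower (7 * s) p)), Rpower_mult in Hgn by apply Rpower_pos.
      unfold c1. nra. }
  set (D := fun k => H (Nat.div2 (S k))).
  assert (Hterm : forall k, box_prob p n (BA s k) (BB s k) <= D (S k) - D k).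
  { intros k. destruct (Nat.Even_or_Odd k) as [[m Hm]|[m Hm]]; subst k.
    - unfold BA, BB. rewrite Nat.even_even, Nat.div2_double. unfold D.
      change (Nat.div2 (S (S (2 * m)))) with (S (Nat.div2 (2 * m))); rewrite Nat.div2_double.
      rewrite Nat.div2_succ_double.
      unfold box_prob, ea, eb. rewrite rprod_const. apply HG.
    - unfold BA, BB. rewrite Nat.even_odd. replace (2*m+1)%nat with (S (2*m)) by lia.
      rewrite Nat.div2_succ_double. unfold D.
      change (Nat.div2 (S (S (S (2 * m))))) with (S (Nat.div2 (S (2 * m)))); rewrite Nat.div2_succ_double.
      change (Nat.div2 (S (S (2 * m)))) with (S (Nat.div2 (2 * m))); rewrite Nat.div2_double.
      unfold box_prob. rewrite rprod_zero; [lra|lia|].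
      unfold oa, ob; simpl. rewrite !Fp_nonpos; try lra.
      rewrite Rmax_left; lra. pose proof (pos_INR m); lra. pose proof (pos_INR m); lra. }
  eapply Rle_trans. apply (rsum_ext_le N _ (fun k => D (S k) - D k)). intros; apply Hterm.
  rewrite rsum_tele. unfold D. change (Nat.div2 1) with 0%nat. unfold H.
  set (M := Nat.div2 (S N)).
  assert (Rmin (INR M) 5 <= 5) by apply Rmin_r.
  assert (phi (Rmin (Rmax (INR M - 4) 1) (/ s)) <= phi (/ s)).
  { apply Hmono. apply Rmin_glb_lt. apply Rlt_le_trans with 1; [lra|apply Rmax_r]. lra. apply Rmin_r. }
  simpl INR. rewrite (Rmin_left 0 5) by lra. rewrite (Rmax_right (0-4) 1) by lra.
  rewrite (Rmin_left 1 (/ s)) by lra. nra.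
Qed.

Lemma Rpower_sq x e : 0 < x -> Rpower (sqrt x) e = Rpower x (e / 2).
Proof. intros. rewrite <- Rpower_sqrt by auto. rewrite Rpower_mult. f_equal. field. Qed.

Lemma Rpower_1_base a : Rpower 1 a = 1.
Proof. unfold Rpower. rewrite ln_1, Rmult_0_r, exp_0. auto. Qed.

Theorem lemma2 (p : R) (n : nat) (hp : 0 < p < 1) (hn : (2 <= n)%nat) :
  (p * INR n <> INR n - 1 ->
    exists C delta, 0 < delta /\
      forall x, 0 < x < delta ->
        prob_le p n (fun y => Qstat n y <= x)
          (C * Rpower x (Rmin (p * INR n) (INR n - 1) / 2))) /\
  (p * INR n = INR n - 1 ->
    exists C delta, 0 < delta /\
      forall x, 0 < x < delta ->
        prob_le p n (fun y => Qstat n y <= x)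
          (C * (Rpower x ((INR n - 1) / 2) * ln (1 / x)))).
Proof.
  assert (Hn0 : (0 < n)%nat) by lia.
  assert (HnR : 2 <= INR n) by (replace 2 with (INR 2) by (simpl; ring); apply le_INR; auto).
  set (al := (1 - p) * INR n).
  assert (Hal0 : 0 <= al) by (unfold al; nra).
  assert (H6 : 0 < 6 ^ n) by (apply pow_lt; lra).
  assert (H7 : 0 < Rpower 7 (p * INR n)) by apply Rpower_pos.
  split.
  - intros Hne. set (a := 1 - al).
    assert (Ha : a <> 0) by (unfold a, al; intro; apply Hne; nra).
    set (phi := fun t => / a * Rpower t a).
    destruct (phi_props phi al Hal0) as [Hmono Hstep].
    { intros c Hc. replace (- al) with (- (1 - a)) by (unfold a; ring). apply deriv_pw; auto. }
    destruct (Rlt_or_le a 0) as [Hneg|Hpos].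
    + exists (5 * Rpower 7 (p * INR n) + 6 ^ n * (- / a)), (/ 4). split. lra.
      intros x Hx eps Heps. exists (BA (sqrt x)), (BB (sqrt x)). split.
      { intros y Hy. apply cover; auto. }
      intros N. eapply Rle_trans. apply (sum_bound p n x phi al); auto.
      assert (Hs0 : 0 < sqrt x) by (apply sqrt_lt_R0; lra).
      rewrite Rmin_left by (unfold a, al in Hneg; lra).
      rewrite <- Rpower_mult_distr by lra. rewrite Rpower_sq by lra.
      assert (phi (/ sqrt x) <= 0).
      { unfold phi. assert (0 < Rpower (/ sqrt x) a) by apply Rpower_pos.
        assert (/ a < 0) by (apply Rinv_lt_0_compat; lra). nra. }
      assert (phi 1 = / a) by (unfold phi; rewrite Rpower_1_base; ring).
      assert (0 < Rpower x (p * INR n / 2)) by apply Rpower_pos.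
      assert (/ a < 0) by (apply Rinv_lt_0_compat; lra).
      match goal with H : phi 1 = / a |- _ => rewrite H end.
      assert (6 ^ n * Rpower x (p * INR n / 2) * phi (/ sqrt x) <= 0).
      { assert (0 <= 6 ^ n * Rpower x (p * INR n / 2)) by (apply Rmult_le_pos; lra). nra. }
      nra.
    + assert (Hpos' : 0 < a) by (destruct Hpos; auto; lra).
      exists (5 * Rpower 7 (p * INR n) + 6 ^ n * / a), (/ 4). split. lra.
      intros x Hx eps Heps. exists (BA (sqrt x)), (BB (sqrt x)). split.
      { intros y Hy. apply cover; auto. }
      intros N. eapply Rle_trans. apply (sum_bound p n x phi al); auto.
      assert (Hs0 : 0 < sqrt x) by (apply sqrt_lt_R0; lra).
      assert (Hs1 : sqrt x <= 1).
      { rewrite <- sqrt_1. apply sqrt_le_1; lra. }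
      rewrite Rmin_right by (unfold a, al in Hpos'; lra).
      assert (E1 : phi (/ sqrt x) = / a * Rpower (sqrt x) (- a)).
      { unfold phi, Rpower. rewrite ln_Rinv by auto. do 2 f_equal. ring. }
      assert (phi 1 = / a) by (unfold phi; rewrite Rpower_1_base; ring).
      assert (E2 : Rpower (sqrt x) (p * INR n) * Rpower (sqrt x) (- a) = Rpower (sqrt x) (INR n - 1)).
      { rewrite <- Rpower_plus. f_equal. unfold a, al. ring. }
      assert (E3 : Rpower (sqrt x) (p * INR n) <= Rpower (sqrt x) (INR n - 1)).
      { apply Rpower_small_base; auto. unfold a, al in Hpos'; lra. }
      rewrite <- Rpower_mult_distr by lra.
      assert (0 < / a) by (apply Rinv_0_lt_compat; lra).
      assert (0 < Rpower (sqrt x) (p * INR n)) by apply Rpower_pos.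
      rewrite <- (Rpower_sq x (INR n - 1)) by lra.
      rewrite E1. match goal with H : phi 1 = / a |- _ => rewrite H end.
      replace (6 ^ n * Rpower (sqrt x) (p * INR n) * (/ a * Rpower (sqrt x) (- a) - / a))
        with (6 ^ n * / a * (Rpower (sqrt x) (p * INR n) * Rpower (sqrt x) (- a)) - 6 ^ n * / a * Rpower (sqrt x) (p * INR n)) by ring.
      rewrite E2.
      assert (Rpower 7 (p * INR n) * Rpower (sqrt x) (p * INR n) <= Rpower 7 (p * INR n) * Rpower (sqrt x) (INR n - 1)) by (apply Rmult_le_compat_l; lra).
      assert (0 <= 6 ^ n * / a * Rpower (sqrt x) (p * INR n)) by (apply Rmult_le_pos; [apply Rmult_le_pos|]; lra).
      nra.
  - intros Heq.
    assert (Hal1 : al = 1) by (unfold al; lra).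
    destruct (phi_props ln al Hal0) as [Hmono Hstep].
    { intros c Hc. rewrite Hal1. apply deriv_ln; auto. }
    assert (Hl4 : 0 < ln 4) by (rewrite <- ln_1; apply ln_increasing; lra).
    exists (5 * Rpower 7 (p * INR n) / ln 4 + 6 ^ n / 2), (/ 4). split. lra.
    intros x Hx eps Heps. exists (BA (sqrt x)), (BB (sqrt x)). split.
    { intros y Hy. apply cover; auto. }
    intros N. eapply Rle_trans. apply (sum_bound p n x ln al); auto.
    assert (Hs0 : 0 < sqrt x) by (apply sqrt_lt_R0; lra).
    rewrite <- Rpower_mult_distr by lra. rewrite Rpower_sq by lra. rewrite Heq.
    assert (El : ln (/ sqrt x) = / 2 * ln (1 / x)).
    { rewrite ln_Rinv by auto. rewrite <- Rpower_sqrt by lra. rewrite ln_Rpower.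
      unfold Rdiv. rewrite Rmult_1_l, ln_Rinv by lra. ring. }
    rewrite El, ln_1.
    assert (H4 : ln 4 <= ln (1 / x)).
    { left. apply ln_increasing. lra. apply Rmult_lt_reg_r with x. lra.
      unfold Rdiv. rewrite Rmult_1_l, Rinv_l by lra. lra. }
    set (X := Rpower x ((INR n - 1) / 2)).
    assert (0 < X) by apply Rpower_pos.
    assert (Hq : 1 <= ln (1 / x) / ln 4).
    { apply Rmult_le_reg_r with (ln 4); auto. unfold Rdiv. rewrite Rmult_assoc, Rinv_l; lra. }
    assert (5 * Rpower 7 (INR n - 1) * X <= 5 * Rpower 7 (INR n - 1) * X * (ln (1 / x) / ln 4)).
    { rewrite <- (Rmult_1_r (5 * Rpower 7 (INR n - 1) * X)) at 1.
      apply Rmult_le_compat_l; auto. assert (0 < Rpower 7 (INR n - 1)) by apply Rpower_pos. nra. }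
    replace (5 * Rpower 7 (INR n - 1) / ln 4 + 6 ^ n / 2) with (5 * Rpower 7 (INR n - 1) / ln 4 + 6 ^ n / 2) by auto.
    unfold Rdiv in *. nra.
Qed.
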